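(* Let $U=\begin{pmatrix} a & b\\ c & d\end{pmatrix}$ be a $2\times 2$ unitary matrix with $abcd\neq 0$, let $\triangle=\det U=ad-bc$, and let $P=\begin{pmatrix} a & b\\ 0&0\end{pmatrix}$, $Q=\begin{pmatrix} 0&0\\ c & d\end{pmatrix}$, $R=\begin{pmatrix} c & d\\ 0&0\end{pmatrix}$, $S=\begin{pmatrix} 0&0\\ a & b\end{pmatrix}$. For integers $l,m\ge 0$ with $l+m=n\ge 1$, let $\Xi(l,m)$ denote the sum of all products $M_1M_2\cdots M_n$ with each $M_j\in\{P,Q\}$, in which exactly $l$ factors equal $P$ and exactly $m$ factors equal $Q$ (one term for each such word). Then: (i) if $\min\{l,m\}\ge 1$, $$\Xi(l,m)=a^l\,\overline{a}^{\,m}\,\triangle^m\sum_{\gamma=1}^{\min\{l,m\}}\left(-\frac{|b|^2}{|a|^2}\right)^{\gamma}\binom{l-1}{\gamma-1}\binom{m-1}{\gamma-1}\left[\frac{l-\gamma}{a\gamma}P+\frac{m-\gamma}{\triangle\,\overline{a}\,\gamma}Q-\frac{1}{\triangle\,\overline{b}}R+\frac{1}{b}S\right];$$ (ii) if $l=n\ge 1$ and $m=0$, then $\Xi(l,0)=a^{l-1}P$; (iii) if $l=0$ and $m=n\ge 1$, then $\Xi(0,m)=\triangle^{m-1}\overline{a}^{\,m-1}Q$.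
   Context: $\overline{z}$ denotes the complex conjugate of $z\in\mathbf{C}$. Unitarity of $U$ gives $|a|^2+|b|^2=|c|^2+|d|^2=1$, $a\overline c+b\overline d=0$, $c=-\triangle\overline{b}$, $d=\triangle\overline{a}$, $|\triangle|=1$. *)

(* Defs.v *)
From HB Require Import structures.
From mathcomp Require Import all_boot all_order all_algebra.
Set Implicit Arguments. Unset Strict Implicit. Unset Printing Implicit Defensive.
Import Order.TTheory GRing.Theory Num.Theory.
Local Open Scope ring_scope.

Definition mx2 (C : numClosedFieldType) (x y z w : C) : 'M[C]_2 :=
  \matrix_(i < 2, j < 2)
    if i == 0 then (if j == 0 then x else y) else (if j == 0 then z else w).

Definition adjoint (C : numClosedFieldType) (n : nat) (A : 'M[C]_n) : 'M[C]_n :=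
  (map_mx Num.conj A)^T.

Definition unitary_mx (C : numClosedFieldType) (n : nat) (A : 'M[C]_n) : Prop :=
  A *m adjoint A = 1%:M.

Definition Xi (C : numClosedFieldType) (X Y : 'M[C]_2) (l m : nat) : 'M[C]_2 :=
  \sum_(w : (l + m).-tuple bool | count id w == l)
     \prod_(x <- w) (if x then X else Y).

(* Main.v *)
Require Import Defs.
From HB Require Import structures.
From mathcomp Require Import all_boot all_order all_algebra.
From mathcomp Require Import ring lra zify.
Import Order.TTheory GRing.Theory Num.Theory.
Set Implicit Arguments. Unset Strict Implicit. Unset Printing Implicit Defensive.
Local Open Scope ring_scope.
Definition comp (i j : nat) : nat :=
  match i, j with
  | 0, 0 => 1%N
  | 0, _.+1 => 0%N
  | _.+1, 0 => 0%N
  | i'.+1, j'.+1 => 'C(i', j')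
  end.

Lemma comp_small i j : (i < j)%N -> comp i j = 0%N.
Proof. case: i => [|i]; case: j => [|j] //= h; exact: bin_small. Qed.

Lemma compS i j : comp i.+1 j.+1 = (comp i j + comp i j.+1)%N.
Proof.
case: i => [|i]; case: j => [|j] //=; rewrite ?bin0n ?addn0 ?bin0 //.
all: by rewrite binS addnC.
Qed.

Lemma comp00 i j : (0 < i + j)%N -> (comp i 0 * comp j 0 = 0)%N.
Proof. by case: i => [|i]; case: j => [|j]. Qed.

Definition Fs (R : comNzRingType) (r : R) (l m : nat) : R :=
  \sum_(k < (l + m).+1) (comp l k.+1 * comp m k)%:R * r ^+ k.
Definition Hs (R : comNzRingType) (r : R) (l m : nat) : R :=
  \sum_(k < (l + m).+1) (comp l k.+1 * comp m k.+1)%:R * r ^+ k.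
Definition Gs (R : comNzRingType) (r : R) (l m : nat) : R := Fs r m l.

Lemma HsC (R : comNzRingType) (r : R) l m : Hs r l m = Hs r m l.
Proof.
rewrite /Hs addnC; apply: eq_bigr => k _; by rewrite mulnC.
Qed.

Lemma F1 (R : comNzRingType) (r : R) l j : (0 < l + j)%N ->
  Fs r l.+1 j = Fs r l j + r * Hs r l j.
Proof.
move=> lj.
rewrite /Fs /Hs addSn.
rewrite (eq_bigr (fun k : 'I__ => (comp l k * comp j k)%:R * r ^+ k +
   (comp l k.+1 * comp j k)%:R * r ^+ k)); last first.
  by move=> k _; rewrite compS mulnDl natrD mulrDl.
rewrite big_split /= addrC; congr (_ + _).
  rewrite [LHS]big_ord_recr /= (comp_small (i:=j)) ?muln0 ?mul0r ?addr0 //.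
  by rewrite ltnS leq_addl.
rewrite big_ord_recl /= comp00 // mul0r add0r mulr_sumr; apply: eq_bigr => k _.
rewrite /bump /= add1n.
by rewrite exprS mulrCA.
Qed.

Lemma H1 (R : comNzRingType) (r : R) l j :
  Hs r l.+1 j = Gs r l j + Hs r l j.
Proof.
rewrite /Gs /Fs /Hs addSn [(j + l)%N]addnC.
rewrite (eq_bigr (fun k : 'I__ => (comp l k * comp j k.+1)%:R * r ^+ k +
   (comp l k.+1 * comp j k.+1)%:R * r ^+ k)); last first.
  by move=> k _; rewrite compS mulnDl natrD mulrDl.
rewrite big_split /=; congr (_ + _).
  rewrite [LHS]big_ord_recr /= (comp_small (i:=j)) ?muln0 ?mul0r ?addr0; last by lia.
  by apply: eq_bigr => k _; rewrite mulnC.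
rewrite [LHS]big_ord_recr /= (comp_small (i:=j)) ?muln0 ?mul0r ?addr0 //; last by lia.
Qed.


Lemma G1 (R : comNzRingType) (r : R) i m : (0 < i + m)%N ->
  Gs r i m.+1 = Gs r i m + r * Hs r i m.
Proof. by move=> h; rewrite /Gs F1 1?HsC // addnC. Qed.

Lemma H2 (R : comNzRingType) (r : R) i m :
  Hs r i m.+1 = Fs r i m + Hs r i m.
Proof. by rewrite HsC H1 [Hs r m i]HsC. Qed.

Lemma Hs_l0 (R : comNzRingType) (r : R) l : Hs r l 0 = 0.
Proof. by rewrite /Hs big1 // => k _; rewrite muln0 mul0r. Qed.
Lemma Gs_l0 (R : comNzRingType) (r : R) l : Gs r l 0 = 0.
Proof. by rewrite /Gs /Fs big1 // => k _; rewrite mul0n mul0r. Qed.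
Lemma Fs_l0 (R : comNzRingType) (r : R) l : (0 < l)%N -> Fs r l 0 = 1.
Proof.
case: l => // l _; rewrite /Fs big_ord_recl /= big1 ?addr0.
  by rewrite bin0 mulr1.
by move=> k _; rewrite muln0 mul0r.
Qed.
Lemma Gs_0m (R : comNzRingType) (r : R) m : (0 < m)%N -> Gs r 0 m = 1.
Proof. by move=> h; rewrite /Gs Fs_l0. Qed.
Lemma Fs_0m (R : comNzRingType) (r : R) m : Fs r 0 m = 0.
Proof. by rewrite -/(Gs r m 0) Gs_l0. Qed.
Definition Yw (R : nzRingType) (X Z : R) (n l : nat) : R :=
  \sum_(w : n.-tuple bool | count id w == l) \prod_(x <- w) (if x then X else Z).

Lemma Ystep (R : nzRingType) (X Z : R) n l :
  Yw X Z n.+1 l = (if l is l'.+1 then X * Yw X Z n l' else 0) + Z * Yw X Z n l.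
Proof.
rewrite /Yw.
rewrite (reindex (fun p : bool * n.-tuple bool => cons_tuple p.1 p.2)) /=; last first.
  exists (fun w : n.+1.-tuple bool => (thead w, behead_tuple w)).
    by move=> [x t] _; congr pair; apply: val_inj.
  by move=> w _; rewrite [RHS]tuple_eta; apply: val_inj.
rewrite -(pair_big_dep xpredT (fun x (t : n.-tuple bool) => count id (x :: t) == l)
   (fun x (t : n.-tuple bool) => \prod_(y <- x :: t) (if y then X else Z))) /=.
rewrite big_bool /=; congr (_ + _).
  case: l => [|l].
    by rewrite big_pred0.
  rewrite mulr_sumr; apply: eq_big => t; first by rewrite add1n eqSS.
  by move=> _; rewrite big_cons.
rewrite mulr_sumr; apply: eq_big => t; first by rewrite add0n.
by move=> _; rewrite big_cons.
Qed.


Lemma ord2E (i : 'I_2) : i = 0 \/ i = 1.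
Proof. case: i => [[|[|i]] Hi]; [left|right|] => //; exact: val_inj. Qed.

Lemma mx2D (C : numClosedFieldType) (x y z w x' y' z' w' : C) :
  mx2 x y z w + mx2 x' y' z' w' = mx2 (x + x') (y + y') (z + z') (w + w').
Proof.
apply/matrixP => i j; rewrite !mxE.
by case: (i == 0); case: (j == 0).
Qed.

Lemma mx2Z (C : numClosedFieldType) (s x y z w : C) :
  s *: mx2 x y z w = mx2 (s * x) (s * y) (s * z) (s * w).
Proof.
apply/matrixP => i j; rewrite !mxE.
by case: (i == 0); case: (j == 0).
Qed.

Lemma mx2M (C : numClosedFieldType) (x y z w x' y' z' w' : C) :
  mx2 x y z w * mx2 x' y' z' w' =
  mx2 (x * x' + y * z') (x * y' + y * w') (z * x' + w * z') (z * y' + w * w').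
Proof.
apply/matrixP => i j; rewrite -mulmxE !mxE !big_ord_recr !big_ord0 /= !mxE.
by case: (ord2E i) => ->; case: (ord2E j) => ->; rewrite /= ?add0r ?mulr0 ?mulr1 ?addr0.
Qed.

Lemma mx2_1 (C : numClosedFieldType) : (1 : 'M[C]_2) = mx2 1 0 0 1.
Proof.
apply/matrixP => i j; rewrite !mxE.
by case: (ord2E i) => ->; case: (ord2E j) => ->; rewrite /= ?add0r ?mulr0 ?mulr1 ?addr0.
Qed.

Definition lc (C : numClosedFieldType) (a b c d x1 x2 x3 x4 : C) : 'M[C]_2 :=
  x1 *: mx2 a b 0 0 + x2 *: mx2 0 0 c d + x3 *: mx2 c d 0 0 + x4 *: mx2 0 0 a b.

Lemma lcE (C : numClosedFieldType) (a b c d x1 x2 x3 x4 : C) :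
  lc a b c d x1 x2 x3 x4 =
  mx2 (x1 * a + x3 * c) (x1 * b + x3 * d) (x2 * c + x4 * a) (x2 * d + x4 * b).
Proof. rewrite /lc !mx2Z !mx2D; congr mx2; ring. Qed.

Lemma Yw_big (R : nzRingType) (X Z : R) n l : (n < l)%N -> Yw X Z n l = 0.
Proof.
move=> h; rewrite /Yw big_pred0 // => w.
apply/negbTE; apply/eqP => e.
have := count_size id w; rewrite size_tuple e; lia.
Qed.

Lemma Yw00 (R : nzRingType) (X Z : R) : Yw X Z 0 0 = 1.
Proof.
rewrite /Yw (big_pred1 [tuple]) ?big_nil // => w.
rewrite [w]tuple0; symmetry; exact: (introT eqP (erefl _)).
Qed.

Lemma XR0 (C : numClosedFieldType) (P Q : 'M[C]_2) : Xi P Q 0 0 = 1.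
Proof. exact: Yw00. Qed.

Lemma XR1 (C : numClosedFieldType) (P Q : 'M[C]_2) l :
  Xi P Q l.+1 0 = P * Xi P Q l 0.
Proof.
change (Yw P Q (l+0).+1 l.+1 = P * Yw P Q (l+0) l).
rewrite Ystep (@Yw_big _ _ _ (l+0) l.+1) ?mulr0 ?addr0 //; lia.
Qed.

Lemma XR2 (C : numClosedFieldType) (P Q : 'M[C]_2) m :
  Xi P Q 0 m.+1 = Q * Xi P Q 0 m.
Proof.
change (Yw P Q m.+1 0 = Q * Yw P Q m 0).
by rewrite Ystep add0r.
Qed.

Lemma XR3 (C : numClosedFieldType) (P Q : 'M[C]_2) l m :
  Xi P Q l.+1 m.+1 = P * Xi P Q l m.+1 + Q * Xi P Q l.+1 m.
Proof.
change (Yw P Q (l + m.+1).+1 l.+1 =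
  P * Yw P Q (l + m.+1) l + Q * Yw P Q (l.+1 + m) l.+1).
by rewrite Ystep addSn -addnS.
Qed.

Lemma PL (C : numClosedFieldType) (a b c d x1 x2 x3 x4 : C) :
  mx2 a b 0 0 * lc a b c d x1 x2 x3 x4 = lc a b c d (a * x1 + b * x4) 0 (b * x2 + a * x3) 0.
Proof. rewrite !lcE mx2M; congr mx2; ring. Qed.

Lemma QL (C : numClosedFieldType) (a b c d x1 x2 x3 x4 : C) :
  mx2 0 0 c d * lc a b c d x1 x2 x3 x4 = lc a b c d 0 (d * x2 + c * x3) 0 (c * x1 + d * x4).
Proof. rewrite !lcE mx2M; congr mx2; ring. Qed.

Lemma lcD (C : numClosedFieldType) (a b c d x1 x2 x3 x4 y1 y2 y3 y4 : C) :
  lc a b c d x1 x2 x3 x4 + lc a b c d y1 y2 y3 y4 =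
  lc a b c d (x1 + y1) (x2 + y2) (x3 + y3) (x4 + y4).
Proof. rewrite !lcE mx2D; congr mx2; ring. Qed.

Definition Phi (C : numClosedFieldType) (a b c d : C) (l m : nat) : 'M[C]_2 :=
  lc a b c d (a ^+ l * d ^+ m * (Fs (b * c / (a * d)) l m / a))
    (a ^+ l * d ^+ m * (Gs (b * c / (a * d)) l m / d))
    (a ^+ l * d ^+ m * (b * Hs (b * c / (a * d)) l m / (a * d)))
    (a ^+ l * d ^+ m * (c * Hs (b * c / (a * d)) l m / (a * d))).

Lemma XiPhi (C : numClosedFieldType) (a b c d : C) : a != 0 -> d != 0 ->
  forall n l m, (l + m = n.+1)%N ->
  Xi (mx2 a b 0 0) (mx2 0 0 c d) l m = Phi a b c d l m.
Proof.
move=> a0 d0; elim=> [|n IH] l m.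
  case: l => [|[|l]]; case: m => [|[|m]] //= _.
    rewrite XR2 XR0 mulr1 /Phi Fs_0m Gs_0m // HsC Hs_l0 lcE; congr mx2; field; by rewrite ?a0 ?d0.
  rewrite XR1 XR0 mulr1 /Phi Fs_l0 // Gs_l0 Hs_l0 lcE; congr mx2; field; by rewrite ?a0 ?d0.
case: l => [|l]; case: m => [|m] //= e.
- have em : m = n.+1 by lia.
  subst m; rewrite XR2 IH //.
  rewrite /Phi QL !Fs_0m !Gs_0m // !(HsC _ 0%N) !Hs_l0.
  congr lc; rewrite ?exprS; field; by rewrite ?a0 ?d0.
- have em : l = n.+1 by lia.
  subst l; rewrite XR1 IH; last lia.
  rewrite /Phi PL !Fs_l0 // !Gs_l0 !Hs_l0.
  congr lc; rewrite ?exprS; field; by rewrite ?a0 ?d0.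
rewrite XR3 IH; last lia.
rewrite IH; last lia.
rewrite /Phi PL QL lcD; congr lc.
- rewrite F1 ?addnS //; rewrite ?exprS; field; by rewrite ?a0 ?d0.
- rewrite G1 ?addSn //; rewrite ?exprS; field; by rewrite ?a0 ?d0.
- rewrite H1; rewrite ?exprS; field; by rewrite ?a0 ?d0.
- rewrite H2; rewrite ?exprS; field; by rewrite ?a0 ?d0.
Qed.

Lemma sum_trunc (C : numClosedFieldType) (f : nat -> C) n0 N : (n0 <= N)%N ->
  (forall k, (n0 <= k)%N -> (k < N)%N -> f k = 0) ->
  \sum_(k < N) f k = \sum_(k < n0) f k.
Proof.
move=> le h; rewrite -!(big_mkord xpredT) (big_cat_nat _ (n := n0)) //=.
rewrite [X in _ + X]big_nat_cond [X in _ + X]big1 ?addr0 // => k /andP[/andP[k1 k2] _].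
exact: h.
Qed.

Lemma Fs_min (C : numClosedFieldType) (t : C) l m :
  Fs t l.+1 m.+1 = \sum_(k < minn l.+1 m.+1) ('C(l, k.+1) * 'C(m, k))%:R * t ^+ k.+1.
Proof.
rewrite /Fs big_ord_recl /= muln0 mul0r add0r.
rewrite (@sum_trunc _ (fun k => ('C(l, k.+1) * 'C(m, k))%:R * t ^+ k.+1) (minn l.+1 m.+1)).
- by [].
- rewrite geq_min; apply/orP; left; lia.
move=> k hk _; case: (leqP l.+1 k) => h.
  by rewrite bin_small ?mul0n ?mul0r //; lia.
rewrite geq_min in hk; case/orP: hk => hk; first lia.
by rewrite (bin_small (n:=m)) ?muln0 ?mul0r //.
Qed.

Lemma Hs_min (C : numClosedFieldType) (t : C) l m :
  Hs t l.+1 m.+1 = \sum_(k < minn l.+1 m.+1) ('C(l, k) * 'C(m, k))%:R * t ^+ k.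
Proof.
rewrite /Hs.
rewrite (@sum_trunc _ (fun k => ('C(l, k) * 'C(m, k))%:R * t ^+ k) (minn l.+1 m.+1)).
- by [].
- rewrite geq_min; apply/orP; left; lia.
move=> k hk _; rewrite geq_min in hk; case/orP: hk => hk.
  by rewrite bin_small ?mul0n ?mul0r //.
by rewrite (bin_small (n:=m)) ?muln0 ?mul0r //.
Qed.

Lemma sumlc (C : numClosedFieldType) (a b c d : C) n (f1 f2 f3 f4 : 'I_n -> C) :
  \sum_(i < n) lc a b c d (f1 i) (f2 i) (f3 i) (f4 i) =
  lc a b c d (\sum_(i < n) f1 i) (\sum_(i < n) f2 i) (\sum_(i < n) f3 i) (\sum_(i < n) f4 i).
Proof. by rewrite /lc !big_split /= !scaler_suml. Qed.

Lemma lcZ (C : numClosedFieldType) (a b c d s x1 x2 x3 x4 : C) :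
  s *: lc a b c d x1 x2 x3 x4 = lc a b c d (s * x1) (s * x2) (s * x3) (s * x4).
Proof. rewrite !lcE mx2Z; congr mx2; ring. Qed.

Lemma term_lc (C : numClosedFieldType) (a b c d k p q z w : C) :
  k *: (p *: mx2 a b 0 0 + q *: mx2 0 0 c d - z *: mx2 c d 0 0 + w *: mx2 0 0 a b)
  = lc a b c d (k * p) (k * q) (- (k * z)) (k * w).
Proof. rewrite lcE -scaleNr !mx2Z !mx2D !mx2Z; congr mx2; ring. Qed.

Lemma nat1 (C : numClosedFieldType) (k : nat) : (1 + k%:R == 0 :> C) = false.
Proof. by rewrite addrC natr1 pnatr_eq0. Qed.

Theorem lemma1 (C : numClosedFieldType) (a b c d : C) :
  unitary_mx (mx2 a b c d) ->
  a * b * c * d != 0 ->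
  let D := a * d - b * c in
  let P := mx2 a b 0 0 in
  let Q := mx2 0 0 c d in
  let R := mx2 c d 0 0 in
  let S := mx2 0 0 a b in
  (forall l m : nat, (1 <= minn l m)%N ->
     Xi P Q l m =
     (a ^+ l * (a^*) ^+ m * D ^+ m) *:
       \sum_(1 <= g < (minn l m).+1)
         ((- (`|b| ^+ 2 / `|a| ^+ 2)) ^+ g
            * ('C(l.-1, g.-1))%:R * ('C(m.-1, g.-1))%:R) *:
         (((l - g)%:R / (a * g%:R)) *: P
          + ((m - g)%:R / (D * a^* * g%:R)) *: Q
          - (1 / (D * b^*)) *: R
          + (1 / b) *: S)) /\
  (forall l : nat, (1 <= l)%N -> Xi P Q l 0 = a ^+ l.-1 *: P) /\
  (forall m : nat, (1 <= m)%N -> Xi P Q 0 m = (D ^+ m.-1 * (a^*) ^+ m.-1) *: Q).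
Proof.
move=> U nz D P Q R S.
have := nz; rewrite !mulf_eq0 !negb_or => /andP[/andP[/andP[a0 b0] c0] d0].
have h00 := congr1 (fun M : 'M[C]_2 => M 0 0) U.
have h10 := congr1 (fun M : 'M[C]_2 => M 1 0) U.
rewrite /adjoint /= !mxE !big_ord_recr big_ord0 /= !mxE /= in h00 h10.
rewrite big_ord0 add0r in h10.
have hd : d = D * a^*.
  apply/eqP; rewrite eq_sym -subr_eq0.
  have -> : D * a^* - d = d * ((0 + a * a^* + b * b^*) - 1) - b * (c * a^* + d * b^*)
    by rewrite /D; ring.
  by rewrite h00 h10 subrr !mulr0 ?subr0 ?subrr.
have hc : c = - (D * b^*).
  apply/eqP; rewrite -subr_eq0.
  have -> : c - - (D * b^*) = a * (c * a^* + d * b^*) - c * ((0 + a * a^* + b * b^*) - 1)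
    by rewrite /D; ring.
  by rewrite h00 h10 subrr !mulr0 ?subr0 ?subrr.
have XP l m : (0 < l + m)%N -> Xi P Q l m = Phi a b c d l m.
  move=> lm; have e : (l + m = (l+m).-1.+1)%N by lia.
  exact: (@XiPhi C a b c d a0 d0 _ l m e).
rewrite /P /Q /R /S in XP *.
clearbody D.
have : D * a^* != 0 by rewrite -hd.
rewrite mulf_eq0 negb_or => /andP[D0 ac0].
have : - (D * b^*) != 0 by rewrite -hc.
rewrite oppr_eq0 mulf_eq0 negb_or => /andP[_ bc0].
split; last split.
- move=> l m lm.
  have l1 : (0 < l)%N by lia.
  have m1 : (0 < m)%N by lia.
  case: l l1 lm => // l _; case: m m1 => // m _ _.
  rewrite XP // big_add1 /= big_mkord.
  under eq_bigr => i _ do rewrite term_lc.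
  rewrite sumlc lcZ /Phi.
  set t := - (`|b| ^+ 2 / `|a| ^+ 2).
  have ht : b * c / (a * d) = t.
    rewrite /t !normCK hc hd; field.
    by rewrite ?a0 ?D0 ?ac0 ?bc0.
  rewrite ht /Gs !Fs_min Hs_min [minn m.+1 l.+1]minnC.
  clearbody t.
  have ht' : t = - (b * b^*) / (a * a^*).
    rewrite -ht hc hd; field; by rewrite ?a0 ?D0 ?ac0 ?bc0.
  congr lc; rewrite ?mulr_suml ?mulr_sumr ?mulr_suml ?mulr_sumr; apply: eq_bigr => k _.
  + have hn := congr1 (fun x : nat => x%:R : C) (mul_bin_left l k).
    rewrite /= !natrM in hn.
    have e : 'C(l, k.+1)%:R = (l - k)%:R * 'C(l, k)%:R / k.+1%:R :> C.
      rewrite -hn; field; by rewrite nat1.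
    rewrite natrM e subSS hd exprMn; field.
    by rewrite ?a0 ?b0 ?D0 ?ac0 ?bc0 ?nat1.
  + have hn := congr1 (fun x : nat => x%:R : C) (mul_bin_left m k).
    rewrite /= !natrM in hn.
    have e : 'C(m, k.+1)%:R = (m - k)%:R * 'C(m, k)%:R / k.+1%:R :> C.
      rewrite -hn; field; by rewrite nat1.
    rewrite natrM e subSS hd exprMn; field.
    by rewrite ?a0 ?b0 ?D0 ?ac0 ?bc0 ?nat1.
  + rewrite [t ^+ k.+1]exprS natrM; move: (t ^+ k) => tk.
    rewrite ht' ?hc ?hd !exprMn; field.
    by rewrite ?a0 ?b0 ?D0 ?ac0 ?bc0 ?nat1.
  + rewrite [t ^+ k.+1]exprS natrM; move: (t ^+ k) => tk.
    rewrite ht' ?hc ?hd !exprMn; field.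
    by rewrite ?a0 ?b0 ?D0 ?ac0 ?bc0 ?nat1.
- case=> // l _; rewrite XP // /Phi Fs_l0 // Gs_l0 Hs_l0 lcE mx2Z /=.
  congr mx2; rewrite exprS; field; by rewrite ?a0 ?d0.
- case=> // m _; rewrite XP // /Phi Fs_0m Gs_0m // HsC Hs_l0 lcE mx2Z /=.
  rewrite hd; congr mx2; rewrite exprS exprMn; field; by rewrite ?a0 ?D0 ?ac0.
Qed.
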